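(* Let $m,n$ be positive integers. The $m\times n$ matrices $B_{1,1},\dots,B_{m,n-1}$ (that is, $B_{i,j}$ for $i\in[m]$, $j\in[n-1]$) together with $C_n$ are linearly independent.
   Context: For $i\in[m]$ and $j\in[n-1]$, $B_{i,j}$ is the $m\times n$ $(0,1)$-matrix whose $(i,j)$ entry is $1$, whose $(j+1)$-th column has all entries equal to $1$ except the $(i,j+1)$ entry which is $0$, and all of whose other entries are $0$. $C_n$ is the $m\times n$ $(0,1)$-matrix whose $n$-th column is all $1$'s and all other entries $0$. *)

(* Defs.v *)
From mathcomp Require Import all_boot all_order all_algebra.
Set Implicit Arguments. Unset Strict Implicit. Unset Printing Implicit Defensive.
Import GRing.Theory Num.Theory.
Local Open Scope ring_scope.

(* Indices are 0-based: row i : 'I_m stands for i+1 in [m], and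
   j : 'I_(n.-1) stands for j+1 in [n-1]; column j+1 (1-based) is 0-based j,
   column j+2 (1-based) is 0-based j+1. *)

Definition Bmat (R : nzRingType) (m n : nat) (i : 'I_m) (j : 'I_(n.-1))
  : 'M[R]_(m, n) :=
  \matrix_(r < m, c < n)
    if (c == j :> nat) then (if r == i then 1 else 0)
    else if (c == j.+1 :> nat) then (if r == i then 0 else 1)
    else 0.

Definition Cmat (R : nzRingType) (m n : nat) : 'M[R]_(m, n) :=
  \matrix_(r < m, c < n) if (c == n.-1 :> nat) then 1 else 0.

Definition BC_family (R : nzRingType) (m n : nat) : seq 'M[R]_(m, n) :=
  [seq Bmat R ij.1 ij.2 | ij <- enum {: 'I_m * 'I_(n.-1)}]
  ++ [:: Cmat R m n].

(* Main.v *)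
Require Import Defs.
From mathcomp Require Import all_boot all_order all_algebra.
Import GRing.Theory Num.Theory.
Local Open Scope ring_scope.

Lemma core (R : numFieldType) (m n : nat) (hm : (0 < m)%N) (hn : (0 < n)%N)
  (a : 'I_m * 'I_(n.-1) -> R) (c : R) :
  \sum_p a p *: Bmat R p.1 p.2 + c *: Cmat R m n = 0 ->
  (forall p, a p = 0) /\ c = 0.
Proof.
move=> H.
have E r col : \sum_p a p * Bmat R p.1 p.2 r col + c * Cmat R m n r col = 0.
  transitivity ((\sum_p a p *: Bmat R p.1 p.2 + c *: Cmat R m n) r col); last by rewrite H mxE.
  rewrite [RHS]mxE [X in _ = X + _]summxE [X in _ = _ + X]mxE; congr (_ + _).
  by apply: eq_bigr => p _; rewrite [RHS]mxE.
have Ha : forall t (ht : (t < n.-1)%N) i, a (i, Ordinal ht) = 0.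
  elim/ltn_ind=> t IH ht r.
  have htn : (t < n)%N by apply: (leq_trans ht); rewrite leq_pred.
  have := E r (Ordinal htn).
  rewrite [Cmat _ _ _ _ _]mxE /= (ltn_eqF ht) mulr0 addr0.
  rewrite (bigD1 (r, Ordinal ht)) //= big1 ?addr0.
    by rewrite mxE /= eqxx eqxx mulr1.
  move=> [i j] /= hp; rewrite mxE /=.
  case: eqP => [hj|_].
    case: eqP => [hi|_]; last by rewrite mulr0.
    by case/eqP: hp; congr pair => //; apply: val_inj.
  case: eqP => [hj|_]; last by rewrite mulr0.
  have hjt : (j < t)%N by rewrite -hj.
  by rewrite (_ : j = Ordinal (ltn_trans hjt ht)) ?IH ?mul0r //; apply: val_inj.
have Ha' p : a p = 0.
  case: p => i [j hj]; exact: Ha.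
split=> //.
have hn1 : (n.-1 < n)%N by rewrite prednK.
have := E (Ordinal hm) (Ordinal hn1).
rewrite big1 ?add0r; last by move=> p _; rewrite Ha' mul0r.
by rewrite mxE /= eqxx mulr1.
Qed.

Theorem mainTheorem7 (R : numFieldType) (m n : nat) (hm : (0 < m)%N) (hn : (0 < n)%N) :
  free (BC_family R m n).
Proof.
set s := BC_family R m n.
set e := enum {: 'I_m * 'I_(n.-1)}.
have hs : size s = (size e).+1 by rewrite size_cat size_map addn1.
rewrite -(in_tupleE s); apply/freeP => k Hk.
pose F j := if insub j is Some i then k i else 0.
have HF : \sum_(0 <= j < size s) F j *: s`_j = 0.
  rewrite big_mkord -[RHS]Hk; apply: eq_bigr => i _.
  by rewrite /F valK.
rewrite hs big_nat_recr //= in HF.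
pose a p := F (index p e).
have Hsum : \sum_(0 <= j < size e) F j *: s`_j = \sum_p a p *: Bmat R p.1 p.2.
  case: (pickP (@predT ('I_m * 'I_(n.-1))%type)) => [x0 _|H0]; last first.
    rewrite [RHS]big1; last by move=> p; have := H0 p.
    have -> : size e = 0%N by rewrite /e -cardE; apply: eq_card0.
    by rewrite big_geq.
  rewrite -big_enum /= (big_nth x0) -/e.
  apply: eq_big_nat => j /andP[_ hj].
  rewrite /a index_uniq ?enum_uniq //; congr (_ *: _).
  rewrite /s /BC_family nth_cat size_map -/e hj (nth_map x0) //.
 
have hC : s`_(size e) = Cmat R m n.
  rewrite /s /BC_family nth_cat.
  have -> : size e = size [seq Bmat R ij.1 ij.2 | ij <- enum {: 'I_m * 'I_(n.-1)}] by rewrite size_map.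
  by rewrite ltnn subnn.
rewrite Hsum hC in HF.
have [Ha Hc] := @core R m n hm hn _ _ HF.
move=> i.
have : F i = k i by rewrite /F valK.
move=> <-.
have : (val i < (size e).+1)%N by rewrite -hs ltn_ord.
rewrite ltnS leq_eqVlt => /orP[/eqP ->//|hi].
have [x0 _] : exists x0 : 'I_m * 'I_(n.-1), True.
  by move: hi; case: (e) => [|x0 e'] // _; exists x0.
have := Ha (nth x0 e i); rewrite /a index_uniq //; exact: enum_uniq.
Qed.
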